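(* Let $M, N, M_{CP}$ be positive integers, $f_c>0$ a carrier frequency, $\Delta f>0$ a subcarrier spacing, $T = 1/\Delta f$, $T_{CP} = \frac{M_{CP}}{M}T$ and $T_u = \frac{M+M_{CP}}{M}T$. Let $X[n,m]\in\mathbb{C}$ for $n=0,\dots,N+1$, $m=0,\dots,M-1$, and let the transmitted baseband waveform be \[ s(t)=\frac{1}{\sqrt{M}}\sum_{n=0}^{N+1}\sum_{m=0}^{M-1}X[n,m]\,g(t-nT_u+T_{CP})\,e^{j2\pi m\Delta f(t-nT_u)}, \] where $g$ is the unit rectangular pulse of duration $T_u$ (equal to $1$ on $[0,T_u)$ and $0$ elsewhere). Define the samples $S[n,l]=s(nT_u+\frac{l}{M}T)=\frac{1}{\sqrt{M}}\sum_{m=0}^{M-1}X[n,m]e^{j2\pi ml/M}$ for $n=0,\dots,N+1$, $l=0,\dots,M-1$. Let the (noise-free) received baseband signal be \[ r(t)=\sum_{i=1}^{N_P}\beta_i\, e^{j2\pi\nu_i t}\, s\!\left(t-\Big(\tau_i-\frac{\nu_i}{f_c}t\Big)\right), \] with path gains $\beta_i\in\mathbb{C}$, delays $\tau_i$ and Doppler shifts $\nu_i$ ($i=1,\dots,N_P$). Set $k_i=\nu_i N T$, $l_i=\tau_i M\Delta f$, and $p_i = f_c/\nu_i$ (with $1/p_i:=0$ if $\nu_i=0$). Assume $l_i\geqslant 1$ and $l_i\leqslant l_{\max}$ for all $i$, where $l_{\max}=\lceil \tau_{\max} M\Delta f\rceil$ with $\tau_{\max}$ the maximum delay; assume $|p_i|>(N+2)M$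 for all $i$; and assume the CP length satisfies $l_{\max}+2\leqslant M_{CP}<M$. Define the received samples $R[n,l]=r(nT_u+\frac{l}{M}T)$. Then for all $n=0,\dots,N+1$ and $l=0,\dots,M-1$, \[ R[n,l]=\sum_{i=1}^{N_P}\sum_{l'=0}^{M-1}h^{i}_{n}[l,l']\,S[n,l'], \] where \[ h^{i}_{n}[l,l']=\beta_i\, e^{j2\pi\frac{n(M+M_{CP})+l}{M}\frac{k_i}{N}\left(1+\frac{(M-1)\Delta f}{2f_c}\right)}\, e^{j\pi\frac{M-1}{M}(l-l'-l_i)}\, \frac{\sin\!\Big(\pi\big(l-l'-l_i+\frac{n(M+M_{CP})+l}{p_i}\big)\Big)}{M\sin\!\Big(\frac{\pi}{M}\big(l-l'-l_i+\frac{n(M+M_{CP})+l}{p_i}\big)\Big)}, \] with the ratio of sines interpreted by continuity (as $M$) when its argument is a multiple of $M$... more precisely, the factor $\frac{\sin(\pi x)}{M\sin(\pi x/M)}$ is understood as its continuous extension $\frac{1}{M}\sum_{m=0}^{M-1}e^{j2\pi m x/M}e^{-j\pi\frac{M-1}{M}x}$.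
   Context: This models a CP-OFDM-based OTFS system in a multipath linear time-variant channel with the Doppler squint effect (the Doppler shift of path $i$ at baseband frequency $f$ is $\frac{\nu_i}{f_c}(f_c+f)$). The $N+2$ OFDM symbols each consist of a cyclic prefix of $M_{CP}$ samples followed by $M$ samples; sampling period is $T/M$. Noise is disregarded. *)

(* Defs.v *)
From HB Require Import structures.
From mathcomp Require Import all_boot all_order all_algebra.
From mathcomp Require Import complex.
From mathcomp Require Import all_classical all_reals all_analysis.
Set Implicit Arguments. Unset Strict Implicit. Unset Printing Implicit Defensive.
Import Order.TTheory GRing.Theory Num.Theory.
Local Open Scope ring_scope.
Local Open Scope complex_scope.

Section OTFS.
Variable R : realType.
Local Notation C := R[i].

Definition expj (th : R) : C := Complex (cos th) (sin th).

Definition cR (x : R) : C := x%:C.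

Variables (M N Mcp : nat) (fc df : R).

Definition Tsym : R := df^-1.
Definition Tcp : R := (Mcp%:R / M%:R) * Tsym.
Definition Tu  : R := ((M + Mcp)%:R / M%:R) * Tsym.

Definition gpulse (t : R) : R := if (0 <= t) && (t < Tu) then 1 else 0.

Definition sig (X : nat -> nat -> C) (t : R) : C :=
  cR (Num.sqrt (M%:R))^-1 *
  \sum_(n < N.+2) \sum_(m < M)
     X n m * cR (gpulse (t - n%:R * Tu + Tcp))
           * expj (2 * pi * m%:R * df * (t - n%:R * Tu)).

Definition Ssamp (X : nat -> nat -> C) (n l : nat) : C :=
  sig X (n%:R * Tu + l%:R / M%:R * Tsym).

Definition rsig (NP : nat) (beta : nat -> C) (tau nu : nat -> R)
    (X : nat -> nat -> C) (t : R) : C :=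
  \sum_(i < NP) beta i * expj (2 * pi * nu i * t)
                 * sig X (t - (tau i - nu i / fc * t)).

Definition Rsamp NP beta tau nu X (n l : nat) : C :=
  rsig NP beta tau nu X (n%:R * Tu + l%:R / M%:R * Tsym).

(* normalized Doppler k_i, normalized delay l_i, and 1/p_i = nu_i / f_c
   (which is 0 when nu_i = 0, as in the paper's convention) *)
Definition kD (nu : nat -> R) i : R := nu i * N%:R * Tsym.
Definition lD (tau : nat -> R) i : R := tau i * M%:R * df.
Definition invp (nu : nat -> R) i : R := nu i / fc.

Definition tau_max NP (tau : nat -> R) : R := \big[Num.max/0]_(i < NP) tau i.
Definition lmax NP (tau : nat -> R) : int := Num.ceil (tau_max NP tau * M%:R * df).

(* continuous extension of sin(pi x) / (M sin(pi x / M)):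
   (1/M) sum_{m<M} e^{j 2 pi m x / M} e^{- j pi (M-1) x / M} *)
Definition Dker (x : R) : C :=
  cR (M%:R)^-1 * \sum_(m < M) expj (2 * pi * m%:R * x / M%:R)
                 * expj (- (pi * (M%:R - 1) * x / M%:R)).

Definition hcoef (beta : nat -> C) (tau nu : nat -> R) (i n l l' : nat) : C :=
  let a := ((n * (M + Mcp) + l)%:R : R) in
  let x := l%:R - l'%:R - lD tau i in
  beta i
  * expj (2 * pi * (a / M%:R) * (kD nu i / N%:R)
            * (1 + (M%:R - 1) * df / (2 * fc)))
  * expj (pi * ((M%:R - 1) / M%:R) * x)
  * Dker (x + a * invp nu i).

End OTFS.

(* Main.v *)
Require Import Defs.
From HB Require Import structures.
From mathcomp Require Import all_boot all_order all_algebra.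
From mathcomp Require Import complex.
From mathcomp Require Import all_classical all_reals all_analysis.
From mathcomp Require Import ring lra zify.
Import Order.TTheory GRing.Theory Num.Theory.
Local Open Scope ring_scope.
Local Open Scope complex_scope.

Section Aux.
Variable R : realType.

Lemma expjD (a b : R) : expj (a + b) = expj a * expj b.
Proof.
rewrite /expj /= cosD sinD; congr Complex; ring.
Qed.

Lemma expj0 : expj (0 : R) = 1.
Proof. by rewrite /expj cos0 sin0. Qed.

Lemma expjX (a : R) k : expj a ^+ k = expj (k%:R * a).
Proof.
elim: k => [|k IH]; first by rewrite mul0r expj0.
by rewrite exprS IH -expjD; congr expj; rewrite mulrSr; ring.
Qed.

Lemma expj2pi : expj (2 * pi : R) = 1.
Proof. by rewrite /expj mulr_natl cos2pi sin2pi. Qed.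

Lemma expj2pin k : expj (2 * pi * k%:R : R) = 1.
Proof. by rewrite mulrC -expjX expj2pi expr1n. Qed.

Lemma expjP2pi (a : R) : expj (a + 2 * pi) = expj a.
Proof. by rewrite expjD expj2pi mulr1. Qed.

Lemma expj_neq1 (t : R) : 0 < t < 2 * pi -> expj t != 1.
Proof.
move=> /andP[t0 t2]; apply/negP => /eqP [] c1 _.
have pi0 := pi_gt0 R.
have z0 : (0:R) \in `[0, pi]%R by rewrite in_itv /= lexx ltW.
case: (lerP t pi) => tp.
  have tI : t \in `[0, pi]%R by rewrite in_itv /= tp ltW.
  have := @cos_inj R t 0 tI z0; rewrite c1 cos0 => /(_ erefl) e.
  by move: t0; rewrite e ltxx.
have tI : 2 * pi - t \in `[0, pi]%R by rewrite in_itv /=; apply/andP; split; lra.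
have := @cos_inj R _ 0 tI z0.
rewrite cos0 -[2 * pi - t]addrC cosD cosN sinN mulr_natl cos2pi sin2pi c1.
rewrite mulr1 mulr0 subr0 => /(_ erefl) e; lra.
Qed.
Lemma orth (M m m' : nat) : (0 < M)%N -> (m < M)%N -> (m' < M)%N ->
  \sum_(l < M) expj (2 * pi * l%:R * (m%:R - m'%:R) / M%:R : R)
  = if m == m' then M%:R else 0.
Proof.
move=> M0 mM m'M.
have Mr : (0:R) < M%:R by rewrite ltr0n.
have pi0 := pi_gt0 R.
case: eqP => [<-|ne].
  rewrite (eq_bigr (fun _ => 1)); last by move=> l _; rewrite subrr mulr0 mul0r expj0.
  by rewrite sumr_const card_ord.
set th : R := 2 * pi * (m%:R - m'%:R) / M%:R.
rewrite (eq_bigr (fun l : 'I_M => expj th ^+ l)); last first.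
  by move=> l _; rewrite expjX /th; congr expj; rewrite !mulrA; ring.
have zM : expj th ^+ M = 1.
  rewrite expjX /th.
  have -> : M%:R * (2 * pi * (m%:R - m'%:R) / M%:R) = 2 * pi * m%:R - 2 * pi * m'%:R :> R.
    by field; rewrite gt_eqF.
  have := expjD (2 * pi * m%:R - 2 * pi * m'%:R) (2 * pi * m'%:R).
  by rewrite subrK !expj2pin mulr1 => <-.
have z1 : expj th != 1.
  have hM : forall d : R, 0 < d < M%:R -> 0 < 2 * pi * d / M%:R < 2 * pi.
    move=> d /andP[d0 dM]; apply/andP; split.
      by rewrite divr_gt0 // mulr_gt0 // mulr_gt0.
    rewrite ltr_pdivrMr // ltr_pM2l //; by rewrite mulr_gt0.
  have mm : m%:R <> m'%:R :> R by move=> /eqP; rewrite eqr_nat => /eqP.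
  case: (ltngtP m m') => [lt|lt|eq]; last by case: ne.
  - have -> : th = (2 * pi * (m%:R + M%:R - m'%:R) / M%:R) - 2 * pi.
      by rewrite /th; field; rewrite gt_eqF.
    have -> : forall a : R, @expj R (a - 2 * pi) = expj a.
      by move=> a; rewrite -[in RHS](subrK (2 * pi) a) expjP2pi.
    apply: expj_neq1; apply: hM.
    have : (m%:R < m'%:R :> R) by rewrite ltr_nat.
    have : (m'%:R < M%:R :> R) by rewrite ltr_nat.
    have : (0 <= m%:R :> R) by rewrite ler0n.
    move=> *; apply/andP; split; lra.
  - apply: expj_neq1; apply: hM.
    have : (m'%:R < m%:R :> R) by rewrite ltr_nat.
    have : (m%:R < M%:R :> R) by rewrite ltr_nat.
    have : (0 <= m'%:R :> R) by rewrite ler0n.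
    move=> *; apply/andP; split; lra.
have := subrX1 (expj th) M; rewrite zM subrr => /esym/eqP.
by rewrite mulf_eq0 subr_eq0 (negbTE z1) /= => /eqP.
Qed.
Lemma gpulse_scale (M Mcp : nat) (df K : R) : (0 < M)%N -> 0 < df ->
  gpulse M Mcp df (K * (Tsym df / M%:R)) = if (0 <= K) && (K < M%:R + Mcp%:R) then 1 else 0.
Proof.
move=> M0 df0; have u0 : 0 < Tsym df / M%:R by rewrite divr_gt0 ?invr_gt0 // ltr0n.
rewrite /gpulse pmulr_lge0 //.
have -> : Tu M Mcp df = (M%:R + Mcp%:R) * (Tsym df / M%:R) by rewrite /Tu natrD; ring.
by rewrite ltr_pM2r.
Qed.

Lemma sig_at (M N Mcp : nat) (df : R) X (n : nat) (y : R) :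
  (0 < M)%N -> 0 < df -> (n <= N.+1)%N -> - Mcp%:R <= y -> y < M%:R ->
  sig M N Mcp df X (n%:R * Tu M Mcp df + y / M%:R * Tsym df) =
  cR (Num.sqrt M%:R)^-1 * \sum_(m < M) X n m * expj (2 * pi * m%:R * y / M%:R).
Proof.
move=> M0 df0 nN y1 y2.
have Mr : (0:R) < M%:R by rewrite ltr0n.
have Mcp0 : (0:R) <= Mcp%:R by rewrite ler0n.
rewrite /sig; congr (_ * _).
have nN2 : (n < N.+2)%N by [].
rewrite (bigD1 (Ordinal nN2)) //= [\sum_(i < N.+2 | _) _]big1 ?addr0.
  apply: eq_bigr => m _.
  have -> : n%:R * Tu M Mcp df + y / M%:R * Tsym df - n%:R * Tu M Mcp df + Tcp M Mcp df
     = (y + Mcp%:R) * (Tsym df / M%:R) by rewrite /Tcp; ring.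
  rewrite gpulse_scale // ifT; last by apply/andP; split; lra.
  rewrite /cR mulr1; congr (_ * expj _).
  rewrite /Tsym; field; by rewrite !gt_eqF.
move=> j /eqP jn; apply: big1 => m _.
have -> : n%:R * Tu M Mcp df + y / M%:R * Tsym df - j%:R * Tu M Mcp df + Tcp M Mcp df
     = ((n%:R - j%:R) * (M%:R + Mcp%:R) + y + Mcp%:R) * (Tsym df / M%:R).
  by rewrite /Tcp /Tu natrD; ring.
rewrite gpulse_scale // ifF ?mulr0 ?mul0r //.
have hj : j <> n :> nat by move=> e; apply: jn; apply: val_inj.
case: (ltngtP j n) => [lt|lt|eq]; last by case: hj.
- have : (j%:R + 1 <= n%:R :> R) by rewrite -[1]/(1%:R) -natrD ler_nat addn1.
  move=> h; apply/negbTE; rewrite negb_and -leNgt; apply/orP; right; nra.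
- have : (n%:R + 1 <= j%:R :> R) by rewrite -[1]/(1%:R) -natrD ler_nat addn1.
  move=> h; apply/negbTE; rewrite negb_and -ltNge; apply/orP; left; nra.
Qed.
Lemma cRMV (M : nat) : (0 < M)%N -> cR ((M%:R : R)^-1) * M%:R = 1.
Proof.
move=> M0; rewrite /cR fmorphV rmorph_nat mulVf //.
by rewrite pnatr_eq0 -lt0n.
Qed.

Lemma kern (M : nat) (L A : R) (l m : nat) : (0 < M)%N -> (m < M)%N ->
  \sum_(l' < M) (expj (pi * ((M%:R - 1) / M%:R) * (l%:R - l'%:R - L))
      * Dker M (l%:R - l'%:R - L + A) * expj (2 * pi * m%:R * l'%:R / M%:R))
  = expj (- (pi * (M%:R - 1) * A / M%:R)) * expj (2 * pi * m%:R * (l%:R - L + A) / M%:R).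
Proof.
move=> M0 mM.
have Mr : (M%:R : R) != 0 by rewrite pnatr_eq0 -lt0n.
set y0 := l%:R - L + A.
rewrite /Dker.
have E1 : forall a b c d (k : R[i]), expj a * (k * (expj b * expj c)) * expj d
   = k * expj (a + b + c + d) by move=> *; rewrite !expjD; ring.
have E2 : forall e f g (k : R[i]), k * (expj e * expj f) * expj g
   = k * expj (e + f + g) by move=> *; rewrite !expjD; ring.
transitivity (\sum_(l' < M) \sum_(m' < M) cR (M%:R : R)^-1 *
   (expj (- (pi * (M%:R - 1) * A / M%:R)) * expj (2 * pi * m'%:R * y0 / M%:R))
   * expj (2 * pi * l'%:R * (m%:R - m'%:R) / M%:R)).
  apply: eq_bigr => l' _; rewrite !mulr_sumr mulr_suml; apply: eq_bigr => m' _.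
  rewrite E1 E2; congr (_ * expj _); rewrite /y0; field => //.
rewrite exchange_big /=.
rewrite (eq_bigr (fun m' : 'I_M => cR (M%:R : R)^-1 *
   (expj (- (pi * (M%:R - 1) * A / M%:R)) * expj (2 * pi * m'%:R * y0 / M%:R))
   * (if m == m' then M%:R else 0))); last first.
  by move=> m' _; rewrite -mulr_sumr orth.
rewrite (bigD1 (Ordinal mM)) //= eqxx [\sum_(i < M | _) _]big1 ?addr0; last first.
  move=> j /eqP jn; rewrite ifF ?mulr0 //; apply/eqP => e; apply: jn; apply: val_inj => /=.
  by rewrite e.
by rewrite mulrC !mulrA [M%:R * _]mulrC cRMV // mul1r.
Qed.
End Aux.

Theorem theorem1 (R : realType) (M N Mcp : nat) (fc df : R)
    (NP : nat) (beta : nat -> R[i]) (tau nu : nat -> R)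
    (X : nat -> nat -> R[i]) :
  (0 < M)%N -> (0 < N)%N -> (0 < Mcp)%N ->
  0 < fc -> 0 < df ->
  (forall i, (i < NP)%N -> 1 <= lD M df tau i) ->
  (forall i, (i < NP)%N -> lD M df tau i <= (lmax M df NP tau)%:~R) ->
  (* |p_i| > (N+2) M, with 1/p_i = 0 when nu_i = 0 *)
  (forall i, (i < NP)%N -> `|invp fc nu i| * ((N.+2 * M)%:R) < 1) ->
  (lmax M df NP tau + 2 <= Mcp%:Z)%R -> (Mcp < M)%N ->
  forall n l : nat, (n <= N.+1)%N -> (l < M)%N ->
    Rsamp M N Mcp fc df NP beta tau nu X n l =
    \sum_(i < NP) \sum_(l' < M)
       hcoef M N Mcp fc df beta tau nu i n l l' * Ssamp M N Mcp df X n l'.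
Proof.
move=> M0 N0 Mcp0 fc0 df0 hl1 hlm hp hcp McpM n l nN lM.
have Mr : (0:R) < M%:R by rewrite ltr0n.
have Nr : (0:R) < N%:R by rewrite ltr0n.
rewrite /Rsamp /rsig; apply: eq_bigr => i _.
have iN := ltn_ord i.
set t := n%:R * Tu M Mcp df + l%:R / M%:R * Tsym df.
set a : R := (n * (M + Mcp) + l)%:R.
set A := a * invp fc nu i.
set L := lD M df tau i.
set y := l%:R - L + A.
have ht : t - (tau i - nu i / fc * t) = n%:R * Tu M Mcp df + y / M%:R * Tsym df.
  rewrite /t /y /A /L /a /invp /lD /Tu /Tsym !natrD natrM.
  field; rewrite ?gt_eqF //.
have hA : `|A| < 2.
  have ha : (n * (M + Mcp) + l <= 2 * (N.+2 * M))%N by nia.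
  have a0 : 0 <= a by rewrite ler0n.
  rewrite /A normrM (ger0_norm a0).
  have := hp i iN; have : a <= 2 * (N.+2 * M)%:R by rewrite /a -natrM ler_nat.
  have : 0 <= `|invp fc nu i| by [].
  move=> *; nra.
have hL1 := hl1 i iN.
have hLm := hlm i iN.
rewrite -/L in hL1 hLm.
have hcpR : (lmax M df NP tau)%:~R + 2 <= (Mcp%:R : R).
  have := hcp; rewrite -(ler_int R) intrD. done.
have [hA1 hA2] : -2 < A /\ A < 2 by move: hA; rewrite ltr_norml => /andP[].
have hl0 : (0:R) <= l%:R by rewrite ler0n.
have hlM : (l%:R : R) + 1 <= M%:R by rewrite -[1]/(1%:R) -natrD ler_nat addn1.
have hy1 : - Mcp%:R <= y by rewrite /y; lra.
have hy2 : y < M%:R by rewrite /y; lra.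
rewrite ht sig_at //.
rewrite [RHS](eq_bigr (fun l' : 'I_M => hcoef M N Mcp fc df beta tau nu i n l l' *
   (cR (Num.sqrt M%:R)^-1 * \sum_(m < M) X n m * expj (2 * pi * m%:R * l'%:R / M%:R)))); last first.
  move=> l' _; rewrite /Ssamp sig_at //.
    by have := ler0n R l'; have := ler0n R Mcp; lra.
  by rewrite ltr_nat.
rewrite /hcoef /= -/a -/L -/A.
set ephi := expj (2 * pi * (a / M%:R) * _ * _).
set c := cR (Num.sqrt M%:R)^-1.
have hph : expj (2 * pi * nu i * t) = ephi * expj (- (pi * (M%:R - 1) * A / M%:R)).
  rewrite /ephi -expjD; congr expj.
  rewrite /t /A /a /invp /kD /Tu /Tsym !natrD natrM.
  field; rewrite ?gt_eqF //.
transitivity (\sum_(m < M) (beta i * ephi * c) * (X n m * \sum_(l' < M)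
   (expj (pi * ((M%:R - 1) / M%:R) * (l%:R - l'%:R - L)) * Dker M (l%:R - l'%:R - L + A)
    * expj (2 * pi * m%:R * l'%:R / M%:R)))).
  rewrite [RHS](eq_bigr (fun m : 'I_M => (beta i * ephi * c) * (X n m *
     (expj (- (pi * (M%:R - 1) * A / M%:R)) * expj (2 * pi * m%:R * (l%:R - L + A) / M%:R)))));
    last by move=> m _; rewrite kern.
  rewrite hph !mulr_sumr; apply: eq_bigr => m _; rewrite /y; ring.
under eq_bigr => m _ do rewrite !mulr_sumr.
rewrite exchange_big /=; apply: eq_bigr => l' _.
rewrite !mulr_sumr; apply: eq_bigr => m _; ring.
Qed.
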